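(* Let $p=\frac12-\varepsilon$ with $0<\varepsilon\le\frac12$, and run Algorithm LB-Search (described in the context) with $r=\frac12-\eta$, where $\eta=\varepsilon/2$. If the reply to each query was erroneous with probability at most $p$, independently, then the algorithm outputs the target vertex with probability at least $1-n^{-3}$.
   Context: Setting: $G=(V,E)$ is a finite simple connected graph with $n$ vertices and an unknown target vertex $v^{*}$. A query on vertex $q$ returns a reply $v$; a correct reply is $v=q$ if $q=v^{*}$, and otherwise a neighbor of $q$ on a shortest path from $q$ to $v^{*}$. A vertex $u$ is consistent (compatible) with reply $v$ to query $q$ if $q=v=u$, or $q\ne v$ and $v$ lies on a shortest path between $u$ and $q$; $N(q,v)$ denotes the set of such $u$. For weights $\omega\colon V\to(0,\infty)$ and $X\subseteq V$ let $\omega(X)=\sum_{u\in X}\omega(u)$, $\Lambda(v)=\max_{u\in N(v)}\omega(N(v,u))$ where $N(v)$ is the neighbor set, and call $q$ $\delta$-close to a median if $\Lambda(q)\le(\frac12+\delta)\omega(V)$. Parameters: it is assumed that $\eta<\frac18$; $r=\frac12-\eta$, $\delta=\eta/4$, $\Gamma=\frac{1}{1-4\eta}$, $\tau=\frac{10\log_2 n}{\eta^2}$. Algorithm LB-Search: set $\omega(v)=1/n$ and a counter $\ell_v=0$ for every $v$. Repeat for $\tau$ steps: let $q$ be any vertex $\delta$-close to a median with respect to current weights; query $q$; for each vertex $u$ not compatible with the reply, set $\omega(u)\gets\omega(u)/\Gamma$ and $\ell_u\gets\ell_u+1$. Finally return a vertex $v$ with the smallest $\ell_v$. *)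

(* Defs.v *)
From HB Require Import structures.
From mathcomp Require Import all_boot all_order all_algebra.
From mathcomp Require Import reals exp.
Set Implicit Arguments. Unset Strict Implicit. Unset Printing Implicit Defensive.
Import Order.TTheory GRing.Theory Num.Theory.
Local Open Scope ring_scope.

(* Graph G = (V, e): e is a symmetric irreflexive relation on a finType V. *)

Definition nbhd (V : finType) (e : rel V) (A : {set V}) : {set V} :=
  A :|: [set y | [exists z in A, e z y]].

Fixpoint ball (V : finType) (e : rel V) (k : nat) (x : V) : {set V} :=
  match k with
  | 0 => [set x]
  | k'.+1 => nbhd e (ball e k' x)
  end.

(* graph distance (the least k with y in the k-ball of x; well-defined
   for connected graphs since distances are < #|V|) *)
Definition gdist (V : finType) (e : rel V) (x y : V) : nat :=
  find (fun k => y \in ball e k x) (iota 0 #|V|).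

Definition on_sp (V : finType) (e : rel V) (u v q : V) : bool :=
  gdist e u q == (gdist e u v + gdist e v q)%N.

(* u is consistent (compatible) with reply v to query q; N(q,v) = {u | ...} *)
Definition compatible (V : finType) (e : rel V) (q v u : V) : bool :=
  ((q == v) && (v == u)) || ((q != v) && on_sp e u v q).

Definition correct_reply (V : finType) (e : rel V) (vs q v : V) : bool :=
  if q == vs then v == q else e q v && on_sp e q v vs.

Definition weight (R : realType) (V : finType) (Gam : R) (l : {ffun V -> nat})
  (u : V) : R := (#|V|%:R)^-1 / Gam ^+ l u.

Definition wN (R : realType) (V : finType) (e : rel V) (Gam : R)
  (l : {ffun V -> nat}) (q v : V) : R :=
  \sum_(u | compatible e q v u) weight Gam l u.

Definition Lambda (R : realType) (V : finType) (e : rel V) (Gam : R)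
  (l : {ffun V -> nat}) (q : V) : R :=
  \big[Num.max/0]_(u | e q u) wN e Gam l q u.

Definition close_to_median (R : realType) (V : finType) (e : rel V)
  (delta Gam : R) (l : {ffun V -> nat}) (q : V) : bool :=
  Lambda e Gam l q <= (1/2 + delta) * \sum_(u : V) weight Gam l u.

Definition upd (V : finType) (e : rel V) (l : {ffun V -> nat}) (q v : V)
  : {ffun V -> nat} :=
  [ffun u => (l u + ~~ compatible e q v u)%N].

(* Counters of LB-Search after k steps, along the error pattern es.
   Q : query chosen, as a function of the past error bits (length k);
   A : reply received, as a function of the error bits including the
       current one (length k+1). *)
Fixpoint counters (V : finType) (e : rel V) (Q A : seq bool -> V)
  (es : seq bool) (k : nat) : {ffun V -> nat} :=
  match k with
  | 0 => [ffun _ => 0%N]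
  | k'.+1 => upd e (counters e Q A es k') (Q (take k' es)) (A (take k'.+1 es))
  end.

(* Main.v *)
Require Import Defs.
From HB Require Import structures.
From mathcomp Require Import all_boot all_order all_algebra.
From mathcomp Require Import reals exp.
From mathcomp Require Import sequences.
From mathcomp Require Import ring lra.
Import Order.TTheory GRing.Theory Num.Theory.
Local Open Scope ring_scope.
Set Implicit Arguments. Unset Strict Implicit.

Lemma ballS (V : finType) (e : rel V) k x y :
  (y \in ball e k.+1 x) = (y \in ball e k x) || [exists z in ball e k x, e z y].
Proof. by rewrite /= /nbhd inE inE. Qed.

Lemma ball_sub (V : finType) (e : rel V) k x y :
  y \in ball e k x -> y \in ball e k.+1 x.
Proof. by rewrite ballS => ->. Qed.

Lemma ball_front (V : finType) (e : rel V) k x y z :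
  e y z -> x \in ball e k z -> x \in ball e k.+1 y.
Proof.
elim: k x => [|k IH] x eyz.
  rewrite /= inE => /eqP ->; rewrite /nbhd !inE; apply/orP; right.
  by apply/existsP; exists y; rewrite inE eqxx.
rewrite ballS => /orP [/IH H|/existsP [z' /andP [Hz' ez'x]]].
  by apply: ball_sub; apply: H.
rewrite ballS; apply/orP; right; apply/existsP; exists z'.
by rewrite ez'x andbT; apply: IH.
Qed.

Lemma ball_sym (V : finType) (e : rel V) : symmetric e -> forall k x y,
  (y \in ball e k x) -> (x \in ball e k y).
Proof.
move=> se; elim=> [|k IH] x y.
  by rewrite /= !inE => /eqP ->.
rewrite ballS => /orP [/IH H|/existsP [z /andP [Hz ezy]]].
  by apply: ball_sub.
apply: (@ball_front _ _ _ _ _ z); first by rewrite se.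
by apply: IH.
Qed.

Lemma gdistC (V : finType) (e : rel V) : symmetric e -> forall x y,
  gdist e x y = gdist e y x.
Proof.
move=> se x y; rewrite /gdist; apply: eq_find => k.
by apply/idP/idP; apply: ball_sym.
Qed.

Lemma gdist0 (V : finType) (e : rel V) x y : gdist e x y = 0%N -> y = x.
Proof.
rewrite /gdist.
have : (0 < #|V|)%N by apply/card_gt0P; exists x.
case: #|V| => // m _.
by rewrite /= inE; case: eqP.
Qed.

Lemma gdistxx (V : finType) (e : rel V) x : gdist e x x = 0%N.
Proof.
rewrite /gdist.
have : (0 < #|V|)%N by apply/card_gt0P; exists x.
case: #|V| => // m _.
by rewrite /= inE eqxx.
Qed.

Lemma q_incompat (V : finType) (e : rel V) q v :
  v != q -> ~~ compatible e q v q.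
Proof.
move=> vq; rewrite /compatible (negbTE vq) /= andbF /=.
rewrite /on_sp gdistxx; apply/negP => /andP [_ /eqP H].
have : gdist e q v = 0%N by move: H; case: (gdist e q v).
by move/gdist0 => E; rewrite E eqxx in vq.
Qed.

Lemma correct_compat (V : finType) (e : rel V) vs q v :
  symmetric e -> irreflexive e -> correct_reply e vs q v -> compatible e q v vs.
Proof.
move=> se ie; rewrite /correct_reply /compatible.
case: eqP => [-> /eqP ->|_ /andP [eqv]]; first by rewrite eqxx.
have -> : q != v by apply/eqP => E; rewrite E ie in eqv.
rewrite /on_sp !(@gdistC _ _ se vs) (@gdistC _ _ se v q) => /eqP ->.
by rewrite addnC eqxx orbT.
Qed.

Definition wt (R : realType) (V : finType) (Gam : R) (l : {ffun V -> nat}) (vs u : V) : R :=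
  Gam ^+ l vs / Gam ^+ l u.
Definition Pot (R : realType) (V : finType) (Gam : R) (l : {ffun V -> nat}) (vs : V) : R :=
  \sum_(u | u != vs) wt Gam l vs u.
Definition Cs (R : realType) (V : finType) (e : rel V) (Gam : R) (l : {ffun V -> nat}) (vs q v : V) : R :=
  \sum_(u | (u != vs) && compatible e q v u) wt Gam l vs u.

Lemma wt_ge0 (R : realType) (V : finType) (Gam : R) l (vs u : V) : 0 < Gam -> 0 <= wt Gam l vs u.
Proof. by move=> g0; rewrite /wt divr_ge0 // exprn_ge0 // ltW. Qed.

Lemma Pot_ge0 (R : realType) (V : finType) (Gam : R) l (vs : V) : 0 < Gam -> 0 <= Pot Gam l vs.
Proof. by move=> g0; apply: sumr_ge0 => u _; apply: wt_ge0. Qed.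

Lemma Cs_ge0 (R : realType) (V : finType) e (Gam : R) l (vs q v : V) : 0 < Gam -> 0 <= Cs e Gam l vs q v.
Proof. by move=> g0; apply: sumr_ge0 => u _; apply: wt_ge0. Qed.

Lemma Cs_le (R : realType) (V : finType) e (Gam : R) l (vs q v : V) : 0 < Gam ->
  Cs e Gam l vs q v <= Pot Gam l vs.
Proof.
move=> g0; rewrite /Cs /Pot [X in _ <= X](bigID (compatible e q v)) /= lerDl.
by apply: sumr_ge0 => u _; apply: wt_ge0.
Qed.

Lemma wt_upd (R : realType) (V : finType) e (Gam : R) l (vs q v u : V) : 0 < Gam ->
  wt Gam (upd e l q v) vs u =
  wt Gam l vs u * (Gam ^+ (~~ compatible e q v vs) / Gam ^+ (~~ compatible e q v u)).
Proof.
move=> g0; rewrite /wt /upd !ffunE !exprD invfM; set a := Gam ^+ _; set b := Gam ^+ _.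
rewrite mulrA -!mulrA; congr (_ * _); rewrite mulrC -!mulrA; congr (_ * _).
by rewrite mulrC.
Qed.

Lemma Pot_upd_le (R : realType) (V : finType) e (Gam : R) l (vs q v : V) : 1 <= Gam ->
  Pot Gam (upd e l q v) vs <= Pot Gam l vs + (Gam - 1) * Cs e Gam l vs q v.
Proof.
move=> g1; have g0 : 0 < Gam by apply: lt_le_trans g1.
rewrite /Pot /Cs big_mkcondr /= mulr_sumr -big_split /=.
apply: ler_sum => u _; rewrite wt_upd //.
have w0 := wt_ge0 l vs u g0.
case: (compatible e q v vs); case: (compatible e q v u) => /=;
  rewrite ?expr0 ?expr1 ?divr1 ?mulr1 ?mulr0 ?addr0 ?divff ?mulr1 ?gt_eqF //.
- nra.
- have : Gam^-1 <= 1 by rewrite invf_le1.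
  rewrite div1r; nra.
- nra.
Qed.

Lemma Pot_upd_eq (R : realType) (V : finType) e (Gam : R) l (vs q v : V) : 0 < Gam ->
  compatible e q v vs ->
  Pot Gam (upd e l q v) vs = Pot Gam l vs - (1 - Gam^-1) * (Pot Gam l vs - Cs e Gam l vs q v).
Proof.
move=> g0 cvs.
rewrite /Pot /Cs big_mkcondr /= -sumrB mulr_sumr -sumrB.
apply: eq_bigr => u _; rewrite wt_upd // cvs /=.
case: (compatible e q v u) => /=; rewrite ?expr0 ?expr1 ?subr0 ?subrr ?mulr0 ?subr0 ?div1r ?divr1 ?mulr1 //.
have : Gam != 0 by rewrite gt_eqF.
by move=> gn; field.
Qed.

Lemma sum_compat (R : realType) (V : finType) e (Gam : R) l (vs q v : V) : 0 < Gam ->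
  compatible e q v vs ->
  \sum_(u | compatible e q v u) wt Gam l vs u = 1 + Cs e Gam l vs q v.
Proof.
move=> g0 cvs; rewrite (bigD1 vs) //= /Cs /wt divff ?expf_neq0 ?gt_eqF //.
by congr (_ + _); apply: eq_bigl => u; rewrite andbC.
Qed.

Lemma sum_compat_ge (R : realType) (V : finType) e (Gam : R) l (vs q v : V) : 0 < Gam ->
  Cs e Gam l vs q v <= \sum_(u | compatible e q v u) wt Gam l vs u.
Proof.
move=> g0; rewrite /Cs [X in X <= _]big_mkcond [X in _ <= X]big_mkcond /=.
apply: ler_sum => u _; case: (u != vs); case: (compatible e q v u) => //=.
exact: wt_ge0.
Qed.

Lemma med (R : realType) (V : finType) (e : rel V) (delta Gam : R) l (vs q v : V) : 0 < Gam ->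
  e q v -> close_to_median e delta Gam l q ->
  \sum_(u | compatible e q v u) wt Gam l vs u <= (1/2 + delta) * (1 + Pot Gam l vs).
Proof.
move=> g0 eqv; rewrite /close_to_median.
have Hl : wN e Gam l q v <= Lambda e Gam l q by apply: le_bigmax_cond.
have n0 : 0 < (#|V|)%:R :> R by rewrite ltr0n; apply/card_gt0P; exists q.
set K := (#|V|)%:R * Gam ^+ l vs.
have K0 : 0 < K by rewrite mulr_gt0 // exprn_gt0.
have wK : forall u, wt Gam l vs u = K * weight Gam l u.
  move=> u; rewrite /wt /weight /K; field.
  by rewrite !gt_eqF // exprn_gt0.
have -> : \sum_(u | compatible e q v u) wt Gam l vs u = K * wN e Gam l q v.
  by rewrite /wN mulr_sumr; apply: eq_bigr => u _; rewrite wK.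
have -> : 1 + Pot Gam l vs = K * \sum_(u : V) weight Gam l u.
  rewrite mulr_sumr (bigD1 vs) //= -wK /wt divff ?gt_eqF ?exprn_gt0 //.
  by congr (_ + _); apply: eq_bigr => u _; rewrite wK.
move=> Hm; rewrite mulrCA; apply: ler_wpM2l; first exact: ltW.
exact: le_trans Hl Hm.
Qed.

Lemma num_core (R : realType) (eps R0 D M p0 X Y : R) :
  0 < eps -> eps < 1/4 -> 0 <= R0 -> 0 <= M ->
  X = R0 - 2 * eps * D -> Y <= R0 + (2 * eps / (1 - 2 * eps)) * M ->
  2 * eps / 3 * R0 <= (1 + 2 * eps) * D - M -> eps / 3 * R0 <= D ->
  0 <= p0 -> p0 <= 1/2 - eps ->
  (1 - p0) * X + p0 * Y <= (1 - 2 * eps ^+ 2 / 3) * R0.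
Proof.
move=> e0 e1 r0 m0 -> hY h1 h2 p00 p01.
have s0 : 0 < 1 - 2 * eps by lra.
have hp : (1/2 - eps) * (2 * eps / (1 - 2 * eps)) = eps.
  by field; rewrite gt_eqF.
set g := 2 * eps / (1 - 2 * eps) in hY hp.
have g0 : 0 <= g by rewrite /g divr_ge0 //; lra.
have hX : R0 - 2 * eps * D <= (1 - 2 * eps ^+ 2 / 3) * R0 by nra.
have hXY : (1 - (1/2 - eps)) * (R0 - 2 * eps * D) + (1/2 - eps) * (R0 + g * M)
   <= (1 - 2 * eps ^+ 2 / 3) * R0 by nra.
set X0 := R0 - 2 * eps * D in hX hXY *.
have [YX|XY] := lerP Y X0.
  nra.
have : p0 * (Y - X0) <= (1/2 - eps) * (R0 + g * M - X0) by nra.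
nra.
Qed.

Lemma num_vs (R : realType) (eps R0 M : R) :
  0 < eps -> eps < 1/4 -> 0 <= R0 -> M <= R0 ->
  2 * eps / 3 * R0 <= (1 + 2 * eps) * R0 - M /\ eps / 3 * R0 <= R0.
Proof. move=> *; split; nra. Qed.

Lemma num_a (R : realType) (eps R0 D a : R) :
  0 < eps -> eps < 1/4 -> 0 <= R0 -> 0 <= a -> a <= D -> (1/2 - eps/8) * (1 + R0) <= D ->
  2 * eps / 3 * R0 <= (1 + 2 * eps) * D - a /\ eps / 3 * R0 <= D.
Proof.
move=> e0 e1 r0 a0 aD hD.
have h2 : eps * ((1/2 - eps/8) * (1 + R0)) <= eps * D by rewrite ler_wpM2l // ltW.
have h3 : eps * eps * R0 <= eps * R0 / 4.
  have h4 : 0 <= (eps * R0) * (1/4 - eps) by apply: mulr_ge0; [apply: mulr_ge0; lra|lra].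
  nra.
split; nra.
Qed.

Lemma num_m (R : realType) (eps R0 D M : R) :
  0 < eps -> eps < 1/4 -> 0 <= R0 -> M <= (1/2 + eps/8) * (1 + R0) -> (1/2 - eps/8) * (1 + R0) <= D ->
  2 * eps / 3 * R0 <= (1 + 2 * eps) * D - M /\ eps / 3 * R0 <= D.
Proof.
move=> e0 e1 r0 hM hD.
have h2 : eps * ((1/2 - eps/8) * (1 + R0)) <= eps * D by rewrite ler_wpM2l // ltW.
have h3 : eps * eps * (1 + R0) <= eps * (1 + R0) / 4.
  have h4 : 0 <= (eps * (1 + R0)) * (1/4 - eps) by apply: mulr_ge0; [apply: mulr_ge0; lra|lra].
  nra.
split; nra.
Qed.

Lemma compat_qq (V : finType) (e : rel V) q u : compatible e q q u = (u == q).
Proof. by rewrite /compatible eqxx /= ?orbF eq_sym. Qed.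

Lemma Cs_qq (R : realType) (V : finType) e (Gam : R) l (vs q : V) :
  q != vs -> Cs e Gam l vs q q = wt Gam l vs q.
Proof.
move=> qvs; rewrite /Cs (eq_bigl (fun u => u == q)) ?big_pred1_eq // => u.
rewrite compat_qq; case: (u =P q) => [->|_]; [by rewrite qvs | by rewrite andbF].
Qed.

Lemma Cs_vs0 (R : realType) (V : finType) e (Gam : R) l (vs : V) :
  Cs e Gam l vs vs vs = 0.
Proof.
rewrite /Cs big_pred0 // => u; rewrite compat_qq; by case: eqP.
Qed.

Lemma Cs_add_q (R : realType) (V : finType) e (Gam : R) l (vs q v : V) : 0 < Gam ->
  q != vs -> ~~ compatible e q v q -> Cs e Gam l vs q v + wt Gam l vs q <= Pot Gam l vs.
Proof.
move=> g0 qvs nc; rewrite /Pot (bigD1 q) //= [X in X <= _]addrC lerD2l /Cs.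
rewrite [X in X <= _]big_mkcond [X in _ <= X]big_mkcond /=.
apply: ler_sum => u _; case: (u =P q) => [->|_]; first by rewrite (negbTE nc) andbF.
case: (u != vs); case: (compatible e q v u) => //=; exact: wt_ge0.
Qed.

Lemma step (R : realType) (V : finType) (e : rel V) (vs q v0 v1 : V) (eps pr0 : R)
  (l : {ffun V -> nat}) :
  symmetric e -> irreflexive e -> 0 < eps -> eps < 1/4 ->
  close_to_median e (eps / 2 / 4) ((1 - 4 * (eps / 2))^-1) l q ->
  correct_reply e vs q v0 ->
  ~~ correct_reply e vs q v1 && ((v1 == q) || e q v1) ->
  0 <= pr0 -> pr0 <= 1/2 - eps ->
  (1 - pr0) * Pot ((1 - 4 * (eps / 2))^-1) (upd e l q v0) vs
    + pr0 * Pot ((1 - 4 * (eps / 2))^-1) (upd e l q v1) vs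
   <= (1 - 2 * eps ^+ 2 / 3) * Pot ((1 - 4 * (eps / 2))^-1) l vs.
Proof.
move=> se ie e0 e1 cm c0 /andP [nc1 h1] p0 p1.
set Gam := (1 - 4 * (eps / 2))^-1 in cm *.
have s0 : 0 < 1 - 4 * (eps / 2) by lra.
have g0 : 0 < Gam by rewrite invr_gt0.
have g1 : 1 <= Gam by rewrite /Gam invf_ge1 //; lra.
have gi : 1 - Gam^-1 = 2 * eps by rewrite /Gam invrK; lra.
have gm : Gam - 1 = 2 * eps / (1 - 2 * eps).
  rewrite /Gam; field; apply/andP; split; rewrite gt_eqF //; lra.
have dl : eps / 2 / 4 = eps / 8 by field.
rewrite dl in cm.
set R0 := Pot Gam l vs.
have r0 : 0 <= R0 by apply: Pot_ge0.
have hX := Pot_upd_eq l g0 (correct_compat se ie c0).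
rewrite gi -/R0 in hX.
have hY := Pot_upd_le e l vs q v1 g1.
rewrite gm -/R0 in hY.
set C1 := Cs e Gam l vs q v1 in hY.
set C0 := Cs e Gam l vs q v0 in hX.
have m0 : 0 <= C1 by apply: Cs_ge0.
suff [H1 H2] : 2 * eps / 3 * R0 <= (1 + 2 * eps) * (R0 - C0) - C1 /\ eps / 3 * R0 <= R0 - C0.
  by apply: (num_core (D := R0 - C0) (M := C1)).
case: (q =P vs) => [qvs|qvs].
  move: c0; rewrite /correct_reply qvs eqxx => /eqP v0q.
  have -> : C0 = 0 by rewrite /C0 v0q qvs Cs_vs0.
  rewrite subr0; apply: num_vs => //; exact: Cs_le.
move/eqP: qvs => qvs.
move: (c0); rewrite /correct_reply (negbTE qvs) => /andP [eqv0 _].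
have v0q : v0 != q by apply/eqP => E; rewrite E ie in eqv0.
have hD : (1/2 - eps/8) * (1 + R0) <= R0 - C0.
  have := med vs g0 eqv0 cm.
  rewrite (sum_compat l g0 (correct_compat se ie c0)).
  rewrite -/C0 -/R0; lra.
case/orP: h1 => [/eqP v1q|eqv1].
  have -> : C1 = wt Gam l vs q by rewrite /C1 v1q Cs_qq.
  apply: num_a => //; first exact: wt_ge0.
  have := Cs_add_q l g0 qvs (q_incompat e v0q).
  rewrite -/C0 -/R0; lra.
apply: num_m => //.
apply: le_trans (med vs g0 eqv1 cm).
exact: sum_compat_ge.
Qed.

Lemma size_flip Tn k (es : Tn.-tuple bool) : (k < Tn)%N ->
  size (set_nth false es k (~~ nth false es k)) == Tn.
Proof. by move=> hk; rewrite size_set_nth size_tuple; apply/eqP/maxn_idPr. Qed.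

Definition flip Tn k (hk : (k < Tn)%N) (es : Tn.-tuple bool) : Tn.-tuple bool :=
  Tuple (size_flip es hk).

Lemma flip_nth Tn k (hk : (k < Tn)%N) es i :
  nth false (flip hk es) i = if i == k then ~~ nth false es k else nth false es i.
Proof. by rewrite /= nth_set_nth. Qed.

Lemma flip_take Tn k (hk : (k < Tn)%N) es : take k (flip hk es) = take k es.
Proof.
apply: (@eq_from_nth _ false).
  by rewrite !size_take !size_tuple.
move=> i; rewrite size_take size_tuple => hi.
have hik : (i < k)%N by move: hi; rewrite leq_min => /andP [].
by rewrite !nth_take // flip_nth (ltn_eqF hik).
Qed.

Lemma flipK Tn k (hk : (k < Tn)%N) : involutive (flip hk).
Proof.
move=> es; apply: eq_from_tnth => i; rewrite !(tnth_nth false) !flip_nth.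
by case: eqP => // ->; rewrite eqxx negbK.
Qed.

Lemma counters_take (V : finType) (e : rel V) Q A (s s' : seq bool) k :
  take k s = take k s' -> counters e Q A s k = counters e Q A s' k.
Proof.
elim: k => [//|k IH] H /=.
have Hk : take k s = take k s'.
  by rewrite -(@take_takel _ k k.+1 s (leqnSn k)) H take_takel.
by rewrite IH // Hk H.
Qed.

Definition pw (R : realType) (pr : nat -> R) (i : nat) (b : bool) : R :=
  if b then pr i else 1 - pr i.

Definition prob (R : realType) Tn (pr : nat -> R) (es : Tn.-tuple bool) : R :=
  \prod_(i < Tn) pw pr i (tnth es i).

Lemma pw_sum (R : realType) (pr : nat -> R) i b : pw pr i b + pw pr i (~~ b) = 1.
Proof. by case: b; rewrite /pw /=; ring. Qed.

Lemma flip_ineq (R : realType) Tn k (hk : (k < Tn)%N) (pr : nat -> R)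
  (F0 F1 : Tn.-tuple bool -> R) (rho : R) :
  (forall i, (i < Tn)%N -> 0 <= pr i <= 1) ->
  (forall es : Tn.-tuple bool, F0 (flip hk es) = F0 es) ->
  (forall es : Tn.-tuple bool, pw pr k (nth false es k) * F1 es + pw pr k (~~ nth false es k) * F1 (flip hk es)
      <= rho * F0 es) ->
  \sum_(es : Tn.-tuple bool) prob pr es * F1 es <= rho * \sum_(es : Tn.-tuple bool) prob pr es * F0 es.
Proof.
move=> hpr hF0 hF.
pose ki := Ordinal hk.
pose rest (es : Tn.-tuple bool) := \prod_(i < Tn | i != ki) pw pr i (tnth es i).
have Hp : forall es : Tn.-tuple bool, prob pr es = pw pr k (nth false es k) * rest es.
  by move=> es; rewrite /prob (bigD1 ki) //= (tnth_nth false).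
have Hr : forall es : Tn.-tuple bool, rest (flip hk es) = rest es.
  move=> es; apply: eq_bigr => i ne; rewrite !(tnth_nth false) flip_nth.
  by have -> : (i == k :> nat) = false by apply/negbTE; move: ne; apply: contra => /eqP E; apply/eqP/val_inj.
have Hn : forall es : Tn.-tuple bool, nth false (flip hk es) k = ~~ nth false es k.
  by move=> es; rewrite flip_nth eqxx.
have rest0 : forall es : Tn.-tuple bool, 0 <= rest es.
  move=> es; apply: prodr_ge0 => i _; rewrite /pw; have := hpr i (ltn_ord i).
  by case: (tnth es i) => /andP [] *; lra.
have finj : injective (flip hk) by apply: inv_inj; apply: flipK.
have E1 : \sum_(es : Tn.-tuple bool) prob pr es * F1 es =
          \sum_(es : Tn.-tuple bool) rest es * (pw pr k (~~ nth false es k) * F1 (flip hk es)).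
  rewrite (reindex_inj finj); apply: eq_bigr => es _.
  by rewrite Hp Hr Hn; ring.
have E0 : \sum_(es : Tn.-tuple bool) prob pr es * F0 es =
          \sum_(es : Tn.-tuple bool) rest es * (pw pr k (~~ nth false es k) * F0 es).
  rewrite (reindex_inj finj); apply: eq_bigr => es _.
  by rewrite Hp Hr Hn hF0; ring.
have H2 : \sum_(es : Tn.-tuple bool) prob pr es * F1 es + \sum_(es : Tn.-tuple bool) prob pr es * F1 es
   <= rho * (\sum_(es : Tn.-tuple bool) prob pr es * F0 es + \sum_(es : Tn.-tuple bool) prob pr es * F0 es).
  rewrite [X in X + _ <= _]E1 -big_split [X in _ <= _ * (_ + X)]E0 -big_split mulr_sumr /=.
  apply: ler_sum => es _; rewrite Hp.
  have := hF es; have := rest0 es; have ab := pw_sum pr k (nth false es k).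
  set r := rest es; set a := pw pr k (nth false es k); set b := pw pr k (~~ nth false es k).
  move=> r0 hh.
  have -> : r * (b * F1 (flip hk es)) + a * r * F1 es = r * (a * F1 es + b * F1 (flip hk es)) by ring.
  have -> : rho * (a * r * F0 es + r * (b * F0 es)) = r * (rho * F0 es) * (a + b) by ring.
  by rewrite ab mulr1 ler_wpM2l.
set A := \sum_(es : Tn.-tuple bool) prob pr es * F1 es in H2 *.
set B := \sum_(es : Tn.-tuple bool) prob pr es * F0 es in H2 *.
rewrite mulrDr in H2; lra.
Qed.

Lemma sum_prob (R : realType) Tn (pr : nat -> R) :
  \sum_(es : Tn.-tuple bool) prob pr es = 1.
Proof.
have H1 : \prod_(i < Tn) \sum_(b : bool) pw pr i b = 1.
  by apply: big1 => i _; rewrite big_bool /=; have := pw_sum pr i true.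
rewrite -H1 bigA_distr_bigA /=.
pose h (f : {ffun 'I_Tn -> bool}) : Tn.-tuple bool := [tuple f i | i < Tn].
pose g (es : Tn.-tuple bool) : {ffun 'I_Tn -> bool} := [ffun i => tnth es i].
have hg : cancel g h by move=> es; apply: eq_from_tnth => i; rewrite tnth_mktuple ffunE.
have gh : cancel h g by move=> f; apply/ffunP => i; rewrite ffunE tnth_mktuple.
rewrite (reindex h) /=; last by exists g => x _.
by apply: eq_bigr => f _; rewrite /prob; apply: eq_bigr => i _; rewrite tnth_mktuple.
Qed.

Lemma final_num (R : realType) (eps : R) (n Tn : nat) :
  0 < eps -> eps < 1/4 -> (0 < n)%N ->
  10 * (ln (n%:R : R) / ln 2) / (eps / 2) ^+ 2 <= Tn%:R ->
  (1 - 2 * eps ^+ 2 / 3) ^+ Tn * n%:R <= (n%:R ^+ 3)^-1.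
Proof.
move=> e0 e1 n0 hT.
set x := 2 * eps ^+ 2 / 3.
have x0 : 0 <= x by rewrite /x; apply: divr_ge0 => //; apply: mulr_ge0 => //; apply: sqr_ge0.
have x1 : x <= 1.
  have : eps ^+ 2 <= 1/16 by rewrite expr2; nra.
  rewrite /x; lra.
have h1 : (1 - x) ^+ Tn <= expR (Tn%:R * - x).
  rewrite expRM_natl; apply: lerXn2r; rewrite ?nnegrE ?expR_ge0 //; first lra.
  by have := expR_ge1Dx (- x); rewrite addrC.
have nR : 0 < (n%:R : R) by rewrite ltr0n.
have ln0 : 0 <= ln (n%:R : R) by apply: ln_ge0; rewrite ler1n.
have l20 : 0 < ln (2 : R) by apply: ln_gt0; lra.
have l21 : ln (2 : R) <= 1.
  have h2p : (2 : R) \in Num.pos by rewrite posrE; lra.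
  rewrite -ler_expR (lnK h2p).
  by have := expR_ge1Dx (1 : R); lra.
have h2 : 4 * ln (n%:R : R) <= Tn%:R * x.
  have h3 : ln (n%:R : R) <= ln (n%:R : R) / ln 2.
    by rewrite ler_pdivlMr //; nra.
  have h4 : 10 * (ln (n%:R : R) / ln 2) / (eps / 2) ^+ 2 * x = 80 / 3 * (ln (n%:R) / ln 2).
    by rewrite /x; field; rewrite !gt_eqF.
  have h5 : 10 * (ln (n%:R : R) / ln 2) / (eps / 2) ^+ 2 * x <= Tn%:R * x by apply: ler_wpM2r.
  lra.
have h6 : expR (Tn%:R * - x) <= expR (- (4%:R * ln (n%:R : R))).
  rewrite ler_expR; lra.
rewrite expRN expRM_natl lnK ?posrE // in h6.
have h7 : (1 - x) ^+ Tn <= (n%:R ^+ 4)^-1 by apply: le_trans h1 h6.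
have -> : (n%:R ^+ 3 : R)^-1 = (n%:R ^+ 4)^-1 * n%:R.
  by field; rewrite gt_eqF.
by apply: ler_wpM2r => //; apply: ltW.
Qed.

Lemma counters_S (V : finType) (e : rel V) Q A (s : seq bool) k :
  counters e Q A s k.+1 = upd e (counters e Q A s k) (Q (take k s)) (A (take k.+1 s)).
Proof. by []. Qed.

Unset Implicit Arguments. Set Strict Implicit.

Theorem lemma11 (R : realType) (V : finType) (e : rel V) (vs : V) (eps : R)
  (Tn : nat) (pr : nat -> R) (Q A : seq bool -> V) (Out : Tn.-tuple bool -> V) :
  symmetric e -> irreflexive e -> (forall x y, connect e x y) ->
  0 < eps -> eps <= 1/2 -> eps / 2 < 1/8 ->
  let n := #|V| in
  let p := 1/2 - eps in
  let eta := eps / 2 in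
  let delta := eta / 4 in
  let Gam := (1 - 4 * eta)^-1 in
  let tau := 10 * (ln (n%:R) / ln 2) / eta ^+ 2 in
  tau <= Tn%:R < tau + 1 ->
  (forall i, (i < Tn)%N -> 0 <= pr i <= p) ->
  (forall (es : Tn.-tuple bool) (k : nat), (k < Tn)%N ->
     close_to_median e delta Gam (counters e Q A es k) (Q (take k es))) ->
  (forall (es : Tn.-tuple bool) (k : nat), (k < Tn)%N ->
     let q := Q (take k es) in
     let v := A (take k.+1 es) in
     if nth false es k
     then ~~ correct_reply e vs q v && ((v == q) || e q v)
     else correct_reply e vs q v) ->
  (forall (es : Tn.-tuple bool) (u : V),
     (counters e Q A es Tn (Out es) <= counters e Q A es Tn u)%N) ->
  1 - (n%:R ^+ 3)^-1 <=
    \sum_(es : Tn.-tuple bool | Out es == vs)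
       \prod_(i < Tn) (if tnth es i then pr i else 1 - pr i).
Proof.
move=> se ie _ e0 _ e8 n p eta delta Gam tau /andP [hT _] hpr hcm hval hout.
have e1 : eps < 1/4 by lra.
set rho := 1 - 2 * eps ^+ 2 / 3.
have rho0 : 0 <= rho.
  have : eps ^+ 2 <= 1/16 by rewrite expr2; nra.
  rewrite /rho; lra.
have hpr1 : forall i, (i < Tn)%N -> 0 <= pr i <= 1.
  move=> i hi; have /andP [a b] := hpr i hi; apply/andP; split => //; rewrite /p in b; lra.
pose Gk k := \sum_(es : Tn.-tuple bool) prob pr es * Pot Gam (counters e Q A es k) vs.
have stepG : forall k, (k < Tn)%N -> Gk k.+1 <= rho * Gk k.
  move=> k hk; rewrite /Gk.
  have hc : forall es : Tn.-tuple bool, counters e Q A (flip hk es) k = counters e Q A es k.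
    by move=> es; apply: counters_take; rewrite flip_take.
  apply: (@flip_ineq R Tn k hk pr (fun es => Pot Gam (counters e Q A es k) vs)
     (fun es => Pot Gam (counters e Q A es k.+1) vs) rho hpr1) => es; cbv beta.
    by rewrite hc.
  have hv1 := hval es k hk; have hv2 := hval (flip hk es) k hk.
  cbv zeta in hv1; cbv zeta in hv2.
  rewrite flip_take !flip_nth eqxx in hv2.
  rewrite !counters_S hc flip_take.
  have hp := hpr k hk; move/andP: hp => [p0 p1].
  case: (nth false es k) hv1 hv2 => /= hv1 hv2.
    rewrite /pw addrC.
    exact: (step se ie e0 e1 (hcm es k hk) hv2 hv1 p0 p1).
  rewrite /pw.
  exact: (step se ie e0 e1 (hcm es k hk) hv1 hv2 p0 p1).
have iter : forall k, (k <= Tn)%N -> Gk k <= rho ^+ k * Gk 0%N.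
  elim=> [|k IH] hk; first by rewrite expr0 mul1r.
  apply: le_trans (stepG k hk) _; rewrite exprS -mulrA; apply: ler_wpM2l => //.
  exact: IH (ltnW hk).
have g0 : 0 < Gam by rewrite /Gam invr_gt0 /eta; lra.
have g1 : 1 <= Gam by rewrite /Gam invf_ge1 /eta; lra.
have G0 : Gk 0%N <= n%:R.
  rewrite /Gk /= -mulr_suml sum_prob mul1r /Pot.
  rewrite (eq_bigr (fun _ => 1)); last by move=> u _; rewrite /wt !ffunE expr0 divr1.
  rewrite [X in _ <= X](_ : _ = \sum_(u : V) (1 : R)); last by rewrite sumr_const.
  rewrite [X in X <= _]big_mkcond; apply: ler_sum => u _; case: (u != vs) => //; exact: ler01.
have Mk : \sum_(es : Tn.-tuple bool | Out es != vs) prob pr es <= Gk Tn.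
  rewrite /Gk [X in _ <= X](bigID (fun es => Out es != vs)) /= -[X in X <= _]addr0.
  apply: lerD.
    apply: ler_sum => es hne; rewrite -[X in X <= _]mulr1; apply: ler_wpM2l.
      by apply: prodr_ge0 => i _; rewrite /pw; have := hpr1 i (ltn_ord i); case: (tnth es i) => /andP [] *; lra.
    set l := counters e Q A es Tn.
    rewrite /Pot (bigD1 (Out es)) //= -[X in X <= _]addr0; apply: lerD.
      rewrite /wt ler_pdivlMr ?mul1r ?exprn_gt0 //; apply: ler_weXn2l => //; exact: hout.
    by apply: sumr_ge0 => u _; apply: wt_ge0.
  apply: sumr_ge0 => es _; apply: mulr_ge0.
    by apply: prodr_ge0 => i _; rewrite /pw; have := hpr1 i (ltn_ord i); case: (tnth es i) => /andP [] *; lra.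
  exact: Pot_ge0.
have n0 : (0 < n)%N by apply/card_gt0P; exists vs.
have Fn := final_num e0 e1 n0 hT.
have Hs := @sum_prob R Tn pr.
rewrite (bigID (fun es => Out es == vs)) /= in Hs.
have h1 := iter Tn (leqnn Tn).
have h2 : rho ^+ Tn * Gk 0%N <= rho ^+ Tn * n%:R by apply: ler_wpM2l => //; apply: exprn_ge0.
have -> : \sum_(es : Tn.-tuple bool | Out es == vs) \prod_(i < Tn) (if tnth es i then pr i else 1 - pr i)
   = \sum_(es : Tn.-tuple bool | Out es == vs) prob pr es by [].
rewrite -/rho in Fn.
lra.
Qed.
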